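(* Let $d\ge2$. (a) Fix $n\ge2$ and let $\Sigma(\cdot)$ be a singularly affine equivariant scatter functional defined on all empirical measures $P_n=n^{-1}\sum_{j=1}^n\delta_{X_j}$ on $\mathbb{R}^d$ (with arbitrary, not necessarily distinct, $X_j\in\mathbb{R}^d$). For a $d\times n$ data matrix $X$ with $j$th column $X_j$, write $\Sigma(X):=\Sigma(P_n)$, let $\bar X:=n^{-1}\sum_{j=1}^nX_j$ and $\mathbf{1}_n$ the $n\times1$ vector of ones. Then there is a constant $c_n\ge0$, depending on $\Sigma(\cdot)$, such that for every $d\times n$ matrix $X$, $$\Sigma(X-\bar X\mathbf{1}_n')=c_n\,(X-\bar X\mathbf{1}_n')(X-\bar X\mathbf{1}_n')'.$$ (b) If $\Sigma(\cdot)$ is an affinely equivariant scatter functional defined for all $n$ and all empirical measures $P_n$ on $\mathbb{R}^d$, and is weakly continuous as a function of $P_n$, then $\Sigma\equiv0$.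
   Context: $\mathcal{N}_d$ denotes the set of $d\times d$ nonnegative definite symmetric matrices. A functional $Q\mapsto\Sigma(Q)\in\mathcal{N}_d$ on a set $\mathcal{D}$ of Borel probability measures on $\mathbb{R}^d$ is an affinely equivariant scatter functional iff for every nonsingular $d\times d$ matrix $A$ and $v\in\mathbb{R}^d$, with $f(x)=Ax+v$, and every $Q\in\mathcal{D}$, the image law $Q\circ f^{-1}$ is in $\mathcal{D}$ and $\Sigma(Q\circ f^{-1})=A\Sigma(Q)A'$. It is singularly affine equivariant if the same holds for all $d\times d$ matrices $A$, possibly singular. *)

(* Defs.v *)
From HB Require Import structures.
From mathcomp Require Import all_boot all_order all_algebra.
From mathcomp Require Import all_classical all_reals all_analysis.
Set Implicit Arguments. Unset Strict Implicit. Unset Printing Implicit Defensive.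
Import Order.TTheory GRing.Theory Num.Theory.
Import numFieldNormedType.Exports.
Local Open Scope classical_set_scope.
Local Open Scope ring_scope.

(* A (finite) measure on R^d = 'cV[R]_d is represented by its set function,
   evaluated on all subsets (for empirical measures this coincides with the
   Borel measure and is determined by it, since singletons are Borel). *)
Definition setfun (R : realType) (d : nat) := set 'cV[R]_d -> R.

Definition emp (R : realType) (d n : nat) (X : 'M[R]_(d, n)) : setfun R d :=
  fun A => n%:R^-1 * \sum_(j < n) \1_A (col j X).

Definition emp_int (R : realType) (d n : nat) (X : 'M[R]_(d, n))
  (f : 'cV[R]_d -> R) : R := n%:R^-1 * \sum_(j < n) f (col j X).

Definition image_law (R : realType) (d : nat) (Q : setfun R d)
  (f : 'cV[R]_d -> 'cV[R]_d) : setfun R d := fun A => Q (f @^-1` A).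

Definition emp_set (R : realType) (d n : nat) : set (setfun R d) :=
  [set Q | exists X : 'M[R]_(d, n), Q = emp X].
Definition emp_all (R : realType) (d : nat) : set (setfun R d) :=
  [set Q | exists n, (0 < n)%N /\ @emp_set R d n Q].

Definition nnd (R : realType) (d : nat) (S : 'M[R]_d) : Prop :=
  S^T = S /\ forall u : 'cV[R]_d, 0 <= (u^T *m S *m u) ord0 ord0.

Definition equivariant_scatter (R : realType) (d : nat) (P : 'M[R]_d -> Prop)
  (D : set (setfun R d)) (Sigma : setfun R d -> 'M[R]_d) : Prop :=
  (forall Q, D Q -> nnd (Sigma Q)) /\
  forall (A : 'M[R]_d) (v : 'cV[R]_d) (Q : setfun R d), P A -> D Q ->
    D (image_law Q (fun x => A *m x + v)) /\
    Sigma (image_law Q (fun x => A *m x + v)) = A *m Sigma Q *m A^T.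

Definition affine_equivariant (R : realType) (d : nat) :=
  @equivariant_scatter R d (fun A => A \in unitmx).
Definition singularly_affine_equivariant (R : realType) (d : nat) :=
  @equivariant_scatter R d (fun _ => True).

Definition emp_weak_cvg (R : realType) (d : nat) (nk : nat -> nat)
  (Xk : forall k, 'M[R]_(d, nk k)) (n : nat) (X : 'M[R]_(d, n)) : Prop :=
  forall f : 'cV[R]_d -> R, continuous f -> (exists M, forall x, `|f x| <= M) ->
    (fun k => emp_int (Xk k) f) @ \oo --> emp_int X f.

Definition weakly_continuous_emp (R : realType) (d : nat)
  (Sigma : setfun R d -> 'M[R]_d) : Prop :=
  forall (nk : nat -> nat) (Xk : forall k, 'M[R]_(d, nk k)) (n : nat)
    (X : 'M[R]_(d, n)),
    (forall k, (0 < nk k)%N) -> (0 < n)%N -> emp_weak_cvg Xk X ->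
    (fun k => Sigma (emp (Xk k))) @ \oo --> Sigma (emp X).

Definition center_data (R : realType) (d n : nat) (X : 'M[R]_(d, n)) : 'M[R]_(d, n) :=
  X - (n%:R^-1 *: (X *m const_mx 1)) *m (const_mx 1 : 'M[R]_(1, n)).

(* Main.v *)
Require Import Defs.
From HB Require Import structures.
From mathcomp Require Import all_boot all_order all_algebra.
From mathcomp Require Import all_classical all_reals all_analysis.
From mathcomp Require Import ring lra.
From mathcomp Require Import fingroup perm.
Set Implicit Arguments. Unset Strict Implicit. Unset Printing Implicit Defensive.
Import Order.TTheory GRing.Theory Num.Theory.
Import numFieldNormedType.Exports.
Local Open Scope classical_set_scope.
Local Open Scope ring_scope.
Lemma col_affine (R : realType) d n (A : 'M[R]_d) (v : 'cV[R]_d) (X : 'M[R]_(d, n)) j :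
  col j (A *m X + v *m const_mx 1) = A *m col j X + v.
Proof.
apply/matrixP => i k; rewrite !mxE; congr (_ + _).
  by apply: eq_bigr => l _; rewrite !mxE.
by rewrite big_ord1 !mxE mulr1 (ord1 k).
Qed.

Lemma image_law_emp (R : realType) d n (A : 'M[R]_d) (v : 'cV[R]_d) (X : 'M[R]_(d, n)) :
  image_law (emp X) (fun x => A *m x + v) = emp (A *m X + v *m const_mx 1).
Proof.
apply/funext => B; rewrite /image_law /emp; congr (_ * _).
apply: eq_bigr => j _; rewrite col_affine !indicE.
by [].
Qed.
Definition Dm (R : realType) d n (i0 i1 : 'I_d) (r s : 'rV[R]_n) : 'M[R]_(d,n) :=
  delta_mx i0 0 *m r + delta_mx i1 0 *m s.

Definition bil (R : realType) d (M : 'M[R]_d) (a b : 'rV[R]_d) : R := (a *m M *m b^T) 0 0.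

Lemma Dm_entry (R : realType) d n (i0 i1 : 'I_d) (r s : 'rV[R]_n) k l :
  Dm i0 i1 r s k l = (k == i0)%:R * r 0 l + (k == i1)%:R * s 0 l.
Proof.
by rewrite !mxE !big_ord1 !mxE /= !andbT.
Qed.

Lemma row_Dm0 (R : realType) d n (i0 i1 : 'I_d) (r s : 'rV[R]_n) :
  i0 != i1 -> row i0 (Dm i0 i1 r s) = r.
Proof.
move=> h; apply/matrixP => k l; rewrite mxE Dm_entry eqxx (negbTE h) (ord1 k).
by rewrite mul1r mul0r addr0.
Qed.

Lemma row_Dm1 (R : realType) d n (i0 i1 : 'I_d) (r s : 'rV[R]_n) :
  i0 != i1 -> row i1 (Dm i0 i1 r s) = s.
Proof.
move=> h; apply/matrixP => k l; rewrite mxE Dm_entry eqxx eq_sym (negbTE h) (ord1 k).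
by rewrite mul1r mul0r add0r.
Qed.

Lemma mul_Dm (R : realType) d n (i0 i1 : 'I_d) (a b : 'rV[R]_d) (X : 'M[R]_(d, n)) :
  Dm i0 i1 a b *m X = Dm i0 i1 (a *m X) (b *m X).
Proof. by rewrite /Dm mulmxDl !mulmxA. Qed.

Lemma conj_Dm (R : realType) d (i0 i1 : 'I_d) (a b : 'rV[R]_d) (M : 'M[R]_d) :
  i0 != i1 ->
  (Dm i0 i1 a b *m M *m (Dm i0 i1 a b)^T) i0 i1 = bil M a b.
Proof.
move=> h; rewrite /bil !mxE; apply: eq_bigr => l _.
have E1 : (Dm i0 i1 a b *m M) i0 l = (a *m M) 0 l.
  have := congr1 (fun A : 'rV[R]_d => A 0 l) (row_mul i0 (Dm i0 i1 a b) M).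
  by rewrite row_Dm0 // !mxE.
have E2 : Dm i0 i1 a b i1 l = b 0 l.
  by have := congr1 (fun A : 'rV[R]_d => A 0 l) (row_Dm1 a b h); rewrite mxE.
by rewrite E1 [X in _ * X]mxE E2 [X in _ = _ * X]mxE.
Qed.

Lemma bilDl (R : realType) d (M : 'M[R]_d) a a' b : bil M (a + a') b = bil M a b + bil M a' b.
Proof. by rewrite /bil !mulmxDl mxE. Qed.
Lemma bilZl (R : realType) d (M : 'M[R]_d) (x : R) a b : bil M (x *: a) b = x * bil M a b.
Proof. by rewrite /bil -!scalemxAl mxE. Qed.
Lemma bilDr (R : realType) d (M : 'M[R]_d) a b b' : bil M a (b + b') = bil M a b + bil M a b'.
Proof. by rewrite /bil linearD /= mulmxDr mxE. Qed.
Lemma bilZr (R : realType) d (M : 'M[R]_d) (x : R) a b : bil M a (x *: b) = x * bil M a b.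
Proof. by rewrite /bil linearZ /= -scalemxAr mxE. Qed.
Lemma bil_e (R : realType) d (M : 'M[R]_d) i j : bil M (delta_mx 0 i) (delta_mx 0 j) = M i j.
Proof.
by rewrite /bil trmx_delta -rowE -colE !mxE.
Qed.
Definition hh (R : realType) d n (F : 'M[R]_(d,n) -> 'M[R]_d) (i0 i1 : 'I_d)
  (r s : 'rV[R]_n) : R := F (Dm i0 i1 r s) i0 i1.

Lemma hhG (R : realType) d n (F : 'M[R]_(d,n) -> 'M[R]_d) (i0 i1 : 'I_d) :
  (forall A X, F (A *m X) = A *m F X *m A^T) -> i0 != i1 ->
  forall a b X, hh F i0 i1 (a *m X) (b *m X) = bil (F X) a b.
Proof. by move=> Heq h a b X; rewrite /hh -mul_Dm Heq conj_Dm. Qed.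

Lemma hhF1 (R : realType) d n (F : 'M[R]_(d,n) -> 'M[R]_d) (i0 i1 : 'I_d) :
  (forall A X, F (A *m X) = A *m F X *m A^T) -> i0 != i1 ->
  forall X i j, F X i j = hh F i0 i1 (row i X) (row j X).
Proof. by move=> Heq h X i j; rewrite !rowE hhG // bil_e. Qed.

Lemma hhQ2 (R : realType) d n (F : 'M[R]_(d,n) -> 'M[R]_d) (i0 i1 : 'I_d) :
  (forall A X, F (A *m X) = A *m F X *m A^T) -> (forall X, (F X)^T = F X) -> i0 != i1 ->
  forall a b c e r s,
  hh F i0 i1 (a *: r + b *: s) (c *: r + e *: s) =
  a * c * hh F i0 i1 r r + (a * e + b * c) * hh F i0 i1 r s + b * e * hh F i0 i1 s s.
Proof.
move=> Heq Hsym h a b c e r s.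
have E : forall x y, x *: r + y *: s = (x *: delta_mx 0 i0 + y *: delta_mx 0 i1) *m Dm i0 i1 r s.
  move=> x y; rewrite mulmxDl -!scalemxAl -!rowE row_Dm0 // row_Dm1 //.
rewrite !E hhG // !(bilDl, bilZl, bilDr, bilZr) !bil_e.
have M00 : F (Dm i0 i1 r s) i0 i0 = hh F i0 i1 r r by rewrite (hhF1 Heq h) row_Dm0.
have M11 : F (Dm i0 i1 r s) i1 i1 = hh F i0 i1 s s by rewrite (hhF1 Heq h) row_Dm1.
have M10 : F (Dm i0 i1 r s) i1 i0 = hh F i0 i1 r s.
  by rewrite -[F _]Hsym mxE.
rewrite M00 M11 M10 -/(hh F i0 i1 r s); ring.
Qed.
Lemma hh_props (R : realType) d n (F : 'M[R]_(d,n) -> 'M[R]_d) (i0 i1 : 'I_d) :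
  (forall A X, F (A *m X) = A *m F X *m A^T) -> (forall X, (F X)^T = F X) -> i0 != i1 ->
  let h := hh F i0 i1 in
  [/\ (forall r s, h r s = h s r),
      (forall x r s, h (x *: r) s = x * h r s),
      (forall x y z, h (x + y) z = h x z + h y z)
    & (forall u w, h (u - w) (u - w) = h u u - 2 * h u w + h w w)].
Proof.
move=> Heq Hsym hi h.
have Q := hhQ2 Heq Hsym hi.
have hS : forall r s, h r s = h s r.
  move=> r s; rewrite {1}/h /hh -[F (Dm i0 i1 r s)]Hsym mxE.
  by rewrite (hhF1 Heq hi _ i1 i0) row_Dm0 // row_Dm1.
have hZ : forall x r s, h (x *: r) s = x * h r s.
  move=> x r s; rewrite /h; have := Q x 0 0 1 r s.
  rewrite !scale0r scale1r addr0 add0r => ->; ring.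
have qD : forall u w, h (u + w) (u + w) = h u u + 2 * h u w + h w w.
  move=> u w; rewrite /h; have := Q 1 1 1 1 u w; rewrite !scale1r => ->; ring.
have qB : forall u w, h (u - w) (u - w) = h u u - 2 * h u w + h w w.
  move=> u w; rewrite /h; have := Q 1 (-1) 1 (-1) u w; rewrite !scale1r !scaleN1r => ->; ring.
split => // x y z.
have hZ2 : forall u v, h u (v + v) = 2 * h u v.
  move=> u v; have -> : v + v = 2%:R *: v by rewrite scaler_nat mulr2n.
  by rewrite hS hZ hS.
have P1 := qD (x + z) (y + z).
have P2 := qB (x + z) (y + z).
have P3 := qD (x - z) (y - z).
have P4 := qB (x - z) (y - z).
have P5 := qD (x + y) (z + z).
have P6 := qB (x + y) (z + z).
have P7 := qD x z. have P8 := qB x z. have P9 := qD y z. have P10 := qB y z.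
have e1 : (x + z) + (y + z) = (x + y) + (z + z) by rewrite addrACA.
have e2 : (x - z) + (y - z) = (x + y) - (z + z) by rewrite addrACA opprD.
have e3 : (x + z) - (y + z) = x - y by rewrite opprD addrACA subrr addr0.
have e4 : (x - z) - (y - z) = x - y by rewrite opprD opprK addrACA addNr addr0.
rewrite e1 in P1; rewrite e3 in P2; rewrite e2 in P3; rewrite e4 in P4.
rewrite hZ2 in P5 P6.
lra.
Qed.
Lemma lin_expand (R : realType) n (h : 'rV[R]_n -> 'rV[R]_n -> R) :
  (forall r s, h r s = h s r) -> (forall x r s, h (x *: r) s = x * h r s) ->
  (forall x y z, h (x + y) z = h x z + h y z) ->
  forall r s, h r s = \sum_k \sum_l r 0 k * s 0 l * h (delta_mx 0 k) (delta_mx 0 l).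
Proof.
move=> hS hZ hD.
have L1 : forall r s, h r s = \sum_k r 0 k * h (delta_mx 0 k) s.
  move=> r s; rewrite {1}(row_sum_delta r).
  have h0 : h 0 s = 0 by rewrite -(scale0r (0 : 'rV[R]_n)) hZ mul0r.
  rewrite (big_morph (fun r => h r s) (fun x y => hD x y s) h0).
  by apply: eq_bigr => k _; rewrite hZ.
move=> r s; rewrite L1; apply: eq_bigr => k _.
rewrite hS L1 big_distrr; apply: eq_bigr => l _; rewrite hS; exact: mulrA.
Qed.

Lemma col_perm_delta (R : realType) n (s : 'S_n) (k : 'I_n) :
  col_perm s (delta_mx 0 k : 'rV[R]_n) = delta_mx 0 (s^-1 k)%g.
Proof.
apply/matrixP => i j; rewrite !mxE; congr (_ && _)%:R.
by rewrite -[RHS](inj_eq (@perm_inj _ s)) permKV.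
Qed.

Lemma hh_perm (R : realType) d n (F : 'M[R]_(d,n) -> 'M[R]_d) (i0 i1 : 'I_d) :
  (forall (s : 'S_n) X, F (col_perm s X) = F X) ->
  forall (s : 'S_n) r t, hh F i0 i1 (col_perm s r) (col_perm s t) = hh F i0 i1 r t.
Proof.
move=> Hp s r t; rewrite /hh !col_permE.
have -> : Dm i0 i1 (r *m perm_mx s^-1) (t *m perm_mx s^-1) = Dm i0 i1 r t *m perm_mx s^-1.
  by rewrite /Dm mulmxDl !mulmxA.
by rewrite -col_permE Hp.
Qed.

Lemma Hform (R : realType) n (h : 'rV[R]_n -> 'rV[R]_n -> R) (j0 j1 : 'I_n) :
  j0 != j1 ->
  (forall (s : 'S_n) r t, h (col_perm s r) (col_perm s t) = h r t) ->
  forall k l, h (delta_mx 0 k) (delta_mx 0 l) =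
    if k == l then h (delta_mx 0 j0) (delta_mx 0 j0) else h (delta_mx 0 j0) (delta_mx 0 j1).
Proof.
move=> hj Hp.
have Hq : forall u v k l, h (delta_mx 0 k) (delta_mx 0 l) =
    h (delta_mx 0 (perm.tperm u v k)) (delta_mx 0 (perm.tperm u v l)).
  move=> u v k l; rewrite -(Hp (perm.tperm u v)) !col_perm_delta.
  by rewrite perm.tpermV.
move=> k l; case: eqP => [<-|/eqP kl].
  by rewrite (Hq k j0 k k) perm.tpermL.
rewrite (Hq k j0 k l) perm.tpermL.
set l' := perm.tperm k j0 l.
have hl : l' != j0.
  apply/eqP => E; move/eqP: kl; apply; apply: (@perm_inj _ (perm.tperm k j0)).
  by rewrite perm.tpermL -/l' E.
rewrite (Hq l' j1 j0 l') perm.tpermL perm.tpermD //.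
by rewrite eq_sym.
Qed.
Lemma core (R : realType) d n (F : 'M[R]_(d,n) -> 'M[R]_d) (i0 i1 : 'I_d) (j0 j1 : 'I_n) :
  (forall A X, F (A *m X) = A *m F X *m A^T) -> (forall X, (F X)^T = F X) ->
  (forall X i, 0 <= F X i i) -> (forall (s : 'S_n) X, F (col_perm s X) = F X) ->
  i0 != i1 -> j0 != j1 ->
  exists c : R, 0 <= c /\ forall Y : 'M[R]_(d, n), (forall i, \sum_k Y i k = 0) ->
    F Y = c *: (Y *m Y^T).
Proof.
move=> Heq Hsym Hpos Hp hi hj.
move: (hh_props Heq Hsym hi) => /= [hS hZ hD qB].
have HF := Hform hj (hh_perm i0 i1 Hp).
set h := hh F i0 i1 in hS hZ hD qB HF *.
set a := h (delta_mx 0 j0) (delta_mx 0 j0) in HF *.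
set b := h (delta_mx 0 j0) (delta_mx 0 j1) in HF *.
exists (a - b); split.
  have := Hpos (Dm i0 i1 (delta_mx 0 j0 - delta_mx 0 j1) (delta_mx 0 j0 - delta_mx 0 j1)) i0.
  rewrite (hhF1 Heq hi) row_Dm0 // -/h qB (HF j1 j1) eqxx -/a -/b.
  lra.
move=> Y HY; apply/matrixP => i j; rewrite (hhF1 Heq hi) -/h (lin_expand hS hZ hD) !mxE.
rewrite mulr_sumr; apply: eq_bigr => k _.
have HYj : \sum_(l < n | l != k) Y j l = - Y j k.
  by move: (HY j); rewrite (bigD1 k) //= => /eqP; rewrite addrC addr_eq0 => /eqP.
rewrite (bigD1 k) //= HF eqxx.
under eq_bigr => l /negbTE hl do rewrite HF eq_sym hl !mxE.
rewrite -big_distrl /= -big_distrr /= HYj !mxE.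
ring.
Qed.
Lemma emp_perm (R : realType) d n (s : 'S_n) (X : 'M[R]_(d,n)) : emp (col_perm s X) = emp X.
Proof.
apply/funext => B; rewrite /emp; congr (_ * _).
rewrite [RHS](reindex_inj (@perm_inj _ s)) /=; apply: eq_bigr => j _.
congr (\1_B _); apply/matrixP => i k; by rewrite !mxE.
Qed.

Lemma two_ords n : (2 <= n)%N -> exists i0 i1 : 'I_n, i0 != i1.
Proof.
move=> h; have h0 : (0 < n)%N by apply: leq_trans h.
by exists (Ordinal h0), (Ordinal h).
Qed.

Lemma nnd_pos (R : realType) d (S : 'M[R]_d) i : nnd S -> 0 <= S i i.
Proof.
move=> [_ /(_ (delta_mx i 0))]; rewrite trmx_delta -(bil_e S i i) /bil.
by rewrite trmx_delta.
Qed.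

Lemma center_rows (R : realType) d n (X : 'M[R]_(d,n)) i : (0 < n)%N ->
  \sum_k center_data X i k = 0.
Proof.
move=> hn; rewrite /center_data.
under eq_bigr => k _ do rewrite !mxE big_ord1 !mxE mulr1.
rewrite sumrB sumr_const card_ord.
under [X in _ * X]eq_bigr => k _ do rewrite mxE mulr1.
set S := \sum_k X i k.
rewrite -mulrnAr; have -> : S *+ n = n%:R * S by rewrite mulr_natl.
rewrite mulrA mulVf ?mul1r ?subrr //.
by rewrite pnatr_eq0 -lt0n.
Qed.

Lemma part_a_core (R : realType) d n (Sigma : setfun R d -> 'M[R]_d) :
  (2 <= d)%N -> (2 <= n)%N -> (forall X : 'M[R]_(d,n), nnd (Sigma (emp X))) ->
  (forall A (X : 'M[R]_(d,n)), Sigma (emp (A *m X)) = A *m Sigma (emp X) *m A^T) ->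
  exists c : R, 0 <= c /\ forall Y : 'M[R]_(d, n), (forall i, \sum_k Y i k = 0) ->
    Sigma (emp Y) = c *: (Y *m Y^T).
Proof.
move=> hd hn Hnnd Heq.
have [i0 [i1 hi]] := two_ords hd.
have [j0 [j1 hj]] := two_ords hn.
apply: (@core R d n (fun X => Sigma (emp X)) i0 i1 j0 j1) => //.
- by move=> X; case: (Hnnd X).
- by move=> X i; apply: nnd_pos.
- by move=> s X; rewrite emp_perm.
Qed.

Lemma part_a (R : realType) (d : nat) (hd : (2 <= d)%N) :
  (forall (n : nat) (Sigma : setfun R d -> 'M[R]_d), (2 <= n)%N ->
     singularly_affine_equivariant (@emp_set R d n) Sigma ->
     exists c : R, 0 <= c /\
       forall X : 'M[R]_(d, n),
         Sigma (emp (center_data X)) = c *: (center_data X *m (center_data X)^T)).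
Proof.
move=> n Sigma hn [Hnnd Heqv].
have Heq : forall A (X : 'M[R]_(d,n)), Sigma (emp (A *m X)) = A *m Sigma (emp X) *m A^T.
  move=> A X; have [_ <-] := Heqv A 0 (emp X) I (ex_intro _ X erefl).
  by rewrite image_law_emp mul0mx addr0.
have [c [c0 Hc]] := part_a_core hd hn (fun X => Hnnd _ (ex_intro _ X erefl)) Heq.
exists c; split => // X; apply: Hc => i; apply: center_rows.
by apply: leq_trans hn.
Qed.
Lemma approx_unit (R : realType) d (A : 'M[R]_d) :
  exists t : nat -> R, (forall k, A + (t k)%:M \in unitmx) /\ t @ \oo --> 0.
Proof.
have H : forall k : nat, exists u : R, (0 <= u <= harmonic k) /\ A + u%:M \in unitmx.
  move=> k; pose a : R := harmonic k.
  have a0 : 0 < a by apply: harmonic_gt0.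
  pose cand (m : nat) : R := a / (m.+1)%:R.
  case: (boolP (has (fun m => A + (cand m)%:M \in unitmx) (iota 0 d.+1))).
    move=> /hasP [m _ Hm]; exists (cand m); split => //.
    apply/andP; split; first by rewrite /cand divr_ge0 // ltW.
    rewrite /cand ler_pdivrMr ?ltr0Sn // ler_peMr ?(ltW a0) //.
    by rewrite ler1n.
  move=> Hn; exfalso.
  pose rs := map (fun m => - cand m) (iota 0 d.+1).
  have Hroot : all (root (char_poly A)) rs.
    apply/allP => x /mapP [m hm ->]; rewrite -eigenvalue_root_char.
    have : ~~ (A + (cand m)%:M \in unitmx).
      by apply: contra Hn => Hu; apply/hasP; exists m.
    rewrite unitmxE unitfE negbK => /det0P [v v0 hv].
    apply/eigenvalueP; exists v => //.
    move: hv; rewrite mulmxDr mul_mx_scalar => /eqP; rewrite addr_eq0 => /eqP ->.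
    by rewrite scaleNr.
  have Huniq : uniq rs.
    rewrite map_inj_uniq ?iota_uniq // => m m' /eqP; rewrite eqr_opp /cand => /eqP E.
    have : (m.+1%:R : R) = m'.+1%:R.
      apply/invr_inj; apply: (mulfI (lt0r_neq0 a0)); exact: E.
    by move/eqP; rewrite eqr_nat eqSS => /eqP.
  have := max_poly_roots (monic_neq0 (char_poly_monic A)) Hroot Huniq.
  by rewrite size_map size_iota size_char_poly ltnn.
have [t Ht] := choice H.
exists t; split; first by move=> k; case: (Ht k).
apply: (@squeeze_cvgr _ _ _ _ (fun _ => 0) harmonic); last exact: cvg_harmonic.
  by apply: nearW => k; case: (Ht k).
exact: cvg_cst.
Qed.
Lemma col_mulmx (R : realType) d n (B : 'M[R]_d) (X : 'M[R]_(d, n)) j :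
  col j (B *m X) = B *m col j X.
Proof. by rewrite !colE mulmxA. Qed.

Lemma weak_approx (R : realType) d n (A : 'M[R]_d) (t : nat -> R) (X : 'M[R]_(d, n)) :
  t @ \oo --> 0 ->
  @emp_weak_cvg R d (fun _ => n) (fun k => (A + (t k)%:M) *m X) n (A *m X).
Proof.
move=> ht f fc _; rewrite /emp_int.
apply: cvgMr.
apply: (@cvg_big R 'I_n +%R 0 xpredT (@add_continuous R) nat \oo (index_enum 'I_n)
  (fun j k => f (col j ((A + (t k)%:M) *m X))) (fun j => f (col j (A *m X)))) => // j _.
have -> : (fun k => f (col j ((A + (t k)%:M) *m X))) =
          (f \o (fun k => A *m col j X + t k *: col j X)).
  by apply/funext => k /=; rewrite col_mulmx mulmxDl mul_scalar_mx.
rewrite col_mulmx; apply: (continuous_cvg _ (fc _)).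
rewrite -[X in _ --> X]addr0.
apply: cvgD; first exact: cvg_cst.
rewrite -(scale0r (col j X)).
exact: cvgZl.
Qed.
Lemma entry_lin (R : realType) d (M1 M2 M3 : 'M[R]_d) (a b : R) i j :
  (M1 + a *: M2 + b *: M3) i j = M1 i j + a * M2 i j + b * M3 i j.
Proof. by rewrite !mxE. Qed.

Lemma conj_expand (R : realType) d (A S : 'M[R]_d) (t : R) :
  (A + t%:M) *m S *m (A + t%:M)^T = A *m S *m A^T + t *: (S *m A^T + A *m S) + (t * t) *: S.
Proof.
rewrite linearD /= tr_scalar_mx mulmxDl mul_scalar_mx mulmxDr mul_mx_scalar mulmxDl.
rewrite -scalemxAl scalerDr scalerA scalerDr !addrA.
congr (_ + _); rewrite -!addrA; congr (_ + _); exact: addrC.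
Qed.

Lemma poly_lim (R : realType) (t : nat -> R) (c0 c1 c2 : R) :
  t @ \oo --> 0 -> (fun k => c0 + t k * c1 + t k * t k * c2) @ \oo --> c0.
Proof.
move=> ht.
have h1 : (fun k => t k * c1) @ \oo --> 0 * c1 by apply: cvgMl.
have h2 : (fun k => t k * t k * c2) @ \oo --> 0 * 0 * c2.
  by apply: cvgMl; exact: (cvgM ht ht).
rewrite !mul0r in h1 h2.
rewrite -[X in _ --> X]addr0 -[X in _ --> X + _]addr0.
have h0 : (fun k : nat => c0) @ \oo --> c0 by exact: cvg_cst.
have h3 := cvgD h0 h1 _.
have h4 := cvgD (h3 _) h2 _.
exact: h4.
Qed.

Lemma heq_all (R : realType) d n (Sigma : setfun R d -> 'M[R]_d) : (0 < n)%N ->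
  affine_equivariant (@emp_all R d) Sigma -> weakly_continuous_emp Sigma ->
  forall A (X : 'M[R]_(d, n)), Sigma (emp (A *m X)) = A *m Sigma (emp X) *m A^T.
Proof.
move=> hn [_ Heqv] Hwc A X.
have [t [tu ht]] := approx_unit A.
set S := Sigma (emp X).
have EQ : forall k, Sigma (emp ((A + (t k)%:M) *m X)) =
    (A + (t k)%:M) *m S *m (A + (t k)%:M)^T.
  move=> k; have [_ <-] := Heqv (A + (t k)%:M) 0 (emp X) (tu k)
    (ex_intro _ n (conj hn (ex_intro _ X erefl))).
  by rewrite image_law_emp mul0mx addr0.
have Hc := Hwc (fun _ => n) (fun k => (A + (t k)%:M) *m X) n (A *m X)
  (fun _ => hn) hn (@weak_approx R d n A t X ht).
apply/matrixP => i j.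
have C1 : ((fun M : 'M[R]_d => M i j) \o (fun k => Sigma (emp ((A + (t k)%:M) *m X))))
    @ \oo --> Sigma (emp (A *m X)) i j.
  by apply: continuous_cvg => //; exact: coord_continuous.
have C2 := @poly_lim R t ((A *m S *m A^T) i j) ((S *m A^T + A *m S) i j) (S i j) ht.
have E : (fun M : 'M[R]_d => M i j) \o (fun k => Sigma (emp ((A + (t k)%:M) *m X))) =
   (fun k => (A *m S *m A^T) i j + t k * (S *m A^T + A *m S) i j + t k * t k * S i j).
  by apply/funext => k /=; rewrite EQ conj_expand entry_lin.
rewrite E in C1.
exact: (cvg_unique _ C1 C2).
Qed.
Lemma sum_mod (R : realType) (G : nat -> R) p m :
  \sum_(0 <= j < (p * m)%N) G ((j %% p)%N) = m%:R * \sum_(0 <= j < p) G j.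
Proof.
elim: m => [|m IH]; first by rewrite muln0 big_geq // mul0r.
rewrite mulnS addnC (@big_cat_nat _ _ _ (p * m)%N) ?leq_addr //= IH.
rewrite -{1}[(p * m)%N]add0n big_addn addKn.
rewrite -natr1 mulrDl mul1r; congr (_ + _).
apply: eq_big_nat => j /andP [_ hj].
by rewrite addnC mulnC modnMDl modn_small.
Qed.

Definition rep (R : realType) d p m (X : 'M[R]_(d, p.+1)) : 'M[R]_(d, p.+1 * m) :=
  \matrix_(i, j) X i (inord ((j %% p.+1)%N)).

Lemma sum_rep (R : realType) p m (G : 'I_p.+1 -> R) :
  \sum_(j < (p.+1 * m)%N) G (inord ((j %% p.+1)%N)) = m%:R * \sum_(j < p.+1) G j.
Proof.
rewrite -(big_mkord xpredT (fun j => G (inord ((j %% p.+1)%N)))).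
rewrite (sum_mod (fun j => G (inord j))) big_mkord.
by congr (_ * _); apply: eq_bigr => j _; rewrite inord_val.
Qed.

Lemma emp_rep (R : realType) d p m (X : 'M[R]_(d, p.+1)) :
  (0 < m)%N -> emp (rep m X) = emp X.
Proof.
move=> hm; apply/funext => B; rewrite /emp.
rewrite (eq_bigr (fun j : 'I_(p.+1 * m) => (fun i => \1_B (col i X)) (inord ((j %% p.+1)%N)))); last first.
  move=> j _; congr (\1_B _); apply/matrixP => i k; by rewrite !mxE.
rewrite (sum_rep m (fun i => \1_B (col i X))) natrM invfM mulrA -[_^-1 * _ * _]mulrA mulVf ?mulr1 //.
by rewrite pnatr_eq0 -lt0n.
Qed.
Lemma outer_entry (R : realType) d N (i0 : 'I_d) (r : 'rV[R]_N) i j :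
  (delta_mx i0 0 *m r) i j = (i == i0)%:R * r 0 j.
Proof. by rewrite !mxE big_ord1 !mxE /= andbT. Qed.

Lemma outer_entry' (R : realType) d N (i0 : 'I_d) (r : 'rV[R]_N) i j :
  (delta_mx i0 0 *m r : 'M[R]_(d, N)) i j = (i == i0)%:R * r 0 j.
Proof. exact: outer_entry. Qed.

Lemma sum_delta_row (R : realType) N (a : 'I_N) : \sum_j (delta_mx 0 a : 'rV[R]_N) 0 j = 1.
Proof.
rewrite (bigD1 a) //= big1 => [|j hj]; first by rewrite !mxE !eqxx addr0.
by rewrite !mxE eqxx /= (negbTE hj).
Qed.

Lemma lt1_2k k : (1 < 2 * k.+1)%N.
Proof. by rewrite mulnS. Qed.

Definition ia k : 'I_(2 * k.+1) := Ordinal (ltnW (lt1_2k k)).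
Definition ib k : 'I_(2 * k.+1) := Ordinal (lt1_2k k).

Lemma ia_ib k : ia k != ib k.
Proof. by []. Qed.

Definition vab (R : realType) N (a b : 'I_N) : 'rV[R]_N := delta_mx 0 a - delta_mx 0 b.

Lemma vab_entry (R : realType) N (a b : 'I_N) j :
  vab R a b 0 j = (j == a)%:R - (j == b)%:R.
Proof. by rewrite !mxE. Qed.

Lemma vab_sum (R : realType) N (a b : 'I_N) : \sum_j vab R a b 0 j = 0.
Proof.
under eq_bigr do rewrite vab_entry.
rewrite sumrB; have E : forall c : 'I_N, \sum_j (j == c)%:R = (1 : R).
  move=> c; rewrite (eq_bigr (fun j => (delta_mx 0 c : 'rV[R]_N) 0 j)) ?sum_delta_row //.
  by move=> j _; rewrite !mxE.
by rewrite !E subrr.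
Qed.

Lemma vab_sq (R : realType) N (a b : 'I_N) : a != b ->
  \sum_j vab R a b 0 j * vab R a b 0 j = 2.
Proof.
move=> hab; rewrite (bigD1 a) //= (bigD1 b) 1?eq_sym //= big1.
  rewrite !vab_entry !eqxx (negbTE hab) eq_sym (negbTE hab) /=; ring.
move=> j /andP [hb ha]; rewrite vab_entry (negbTE ha) (negbTE hb) /=; ring.
Qed.
Lemma entry_scale (R : realType) m n (a : R) (M : 'M[R]_(m, n)) i j : (a *: M) i j = a * M i j.
Proof. by rewrite mxE. Qed.

Definition Zseq (R : realType) d (i0 : 'I_d) (k : nat) : 'M[R]_(d, 2 * k.+1) :=
  Num.sqrt (k.+1%:R) *: (delta_mx i0 0 *m vab R (ia k) (ib k)).

Lemma Zseq_entry (R : realType) d (i0 : 'I_d) k i j :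
  Zseq R i0 k i j = Num.sqrt (k.+1%:R) * ((i == i0)%:R * vab R (ia k) (ib k) 0 j).
Proof. by rewrite /Zseq entry_scale outer_entry. Qed.

Lemma weak_Z (R : realType) d (i0 : 'I_d) :
  @emp_weak_cvg R d (fun k => (2 * k.+1)%N) (Zseq R i0) 2 0.
Proof.
move=> f fc [M hM].
have E0 : emp_int (0 : 'M[R]_(d,2)) f = f 0.
  rewrite /emp_int.
  have -> : \sum_(j < 2) f (col j (0 : 'M[R]_(d,2))) = \sum_(j < 2) f 0.
    by apply: eq_bigr => j _; congr f; apply/matrixP => i k; rewrite !mxE.
  by rewrite sumr_const card_ord mulr2n; field.
rewrite E0.
pose D k := (f (col (ia k) (Zseq R i0 k)) - f 0) + (f (col (ib k) (Zseq R i0 k)) - f 0).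
have Ek : forall k, emp_int (Zseq R i0 k) f = f 0 + harmonic k * (D k / 2).
  move=> k; rewrite /emp_int.
  have -> : \sum_(j < 2 * k.+1) f (col j (Zseq R i0 k)) =
            \sum_(j < 2 * k.+1) f 0 + \sum_(j < 2 * k.+1) (f (col j (Zseq R i0 k)) - f 0).
    by rewrite -big_split /=; apply: eq_bigr => j _; rewrite addrC subrK.
  rewrite sumr_const card_ord (bigD1 (ia k)) //= (bigD1 (ib k)) 1?eq_sym ?ia_ib //= big1; last first.
    move=> j /andP [hb ha]; apply/eqP; rewrite subr_eq0; apply/eqP; congr f; apply/matrixP => i l.
    rewrite mxE Zseq_entry vab_entry (negbTE ha) (negbTE hb) !mxE; ring.
  rewrite addr0 -/(D k) /=.
  have -> : f 0 *+ (2 * k.+1) = (2 * k.+1)%:R * f 0 by rewrite mulr_natl.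
  rewrite natrM; field.
  by rewrite addrC natr1 pnatr_eq0.
have -> : (fun k => emp_int (Zseq R i0 k) f) = (fun k => f 0 + harmonic k * (D k / 2)).
  by apply/funext => k; rewrite Ek.
rewrite -[X in _ --> X]addr0.
have h0 : (fun k : nat => f 0) @ \oo --> f 0 by exact: cvg_cst.
have M0 : 0 <= M by apply: le_trans (hM 0); exact: normr_ge0.
have hl : (fun k => - (2 * M) * harmonic k) @ \oo --> - (2 * M) * 0.
  by apply: cvgMr; exact: cvg_harmonic.
have hu : (fun k => (2 * M) * harmonic k) @ \oo --> (2 * M) * 0.
  by apply: cvgMr; exact: cvg_harmonic.
rewrite mulr0 in hl; rewrite mulr0 in hu.
have hs : (fun k => harmonic k * (D k / 2)) @ \oo --> 0.
  apply: (@squeeze_cvgr _ _ _ _ (fun k => - (2 * M) * harmonic k) (fun k => (2 * M) * harmonic k)); [|exact: hl|exact: hu].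
  apply: nearW => k.
  have hk : 0 < harmonic k :> R by apply: harmonic_gt0.
  have hD : - (4 * M) <= D k <= 4 * M.
    have := hM (col (ia k) (Zseq R i0 k)); have := hM (col (ib k) (Zseq R i0 k)).
    have := hM 0; rewrite /D !ler_norml => /andP [? ?] /andP [? ?] /andP [? ?].
    apply/andP; split; lra.
  case/andP: hD => hD1 hD2.
  apply/andP; split; nra.
exact: (cvgD h0 hs).
Qed.
Lemma part_b (R : realType) d (hd : (2 <= d)%N) (Sigma : setfun R d -> 'M[R]_d) :
  affine_equivariant (@emp_all R d) Sigma -> weakly_continuous_emp Sigma ->
  forall Q, @emp_all R d Q -> Sigma Q = 0.
Proof.
move=> Hae Hwc.
have Hnnd : forall n (X : 'M[R]_(d,n)), (0 < n)%N -> nnd (Sigma (emp X)).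
  move=> n X hn; case: Hae => H _; apply: H; exists n; split => //; by exists X.
have hc : forall n, (2 <= n)%N -> exists c : R, 0 <= c /\
    forall Y : 'M[R]_(d, n), (forall i, \sum_k Y i k = 0) -> Sigma (emp Y) = c *: (Y *m Y^T).
  move=> n hn; have hn0 : (0 < n)%N by apply: leq_trans hn.
  apply: part_a_core => // [X|]; first exact: Hnnd.
  exact: heq_all.
have [i0 [i1 hi]] := two_ords hd.
have Htr : forall n (X : 'M[R]_(d,n)), (0 < n)%N ->
    Sigma (emp (center_data X)) = Sigma (emp X).
  move=> n X hn; case: Hae => _ H.
  have [_ E] := H 1%:M (- (n%:R^-1 *: (X *m const_mx 1))) (emp X) (unitmx1 _ _)
    (ex_intro _ n (conj hn (ex_intro _ X erefl))).
  by rewrite image_law_emp mul1mx mulNmx mul1mx trmx1 mulmx1 in E.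
have [c2 [_ Hc2]] := hc 2%N (leqnn 2).
pose W : 'M[R]_(d, 2) := delta_mx i0 0 *m vab R ord0 ord_max.
have Wc : forall i, \sum_k W i k = 0.
  move=> i; rewrite /W; under eq_bigr do rewrite outer_entry'.
  by rewrite -mulr_sumr vab_sum mulr0.
have WW : (W *m W^T) i0 i0 = 2.
  rewrite /W mxE; under eq_bigr do rewrite [X in _ * X]mxE ?outer_entry ?outer_entry' ?outer_entry ?outer_entry' eqxx !mul1r.
  exact: vab_sq.
have Hm : forall m, (0 < m)%N -> forall c : R,
    (forall Y : 'M[R]_(d, 2 * m), (forall i, \sum_k Y i k = 0) ->
       Sigma (emp Y) = c *: (Y *m Y^T)) -> c * m%:R = c2.
  move=> m hm c Hc.
  have E := emp_rep W hm.
  have Rc : forall i, \sum_k rep m W i k = 0.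
    move=> i; rewrite (eq_bigr (fun k : 'I_(2 * m) => (fun j => W i j) (inord ((k %% 2)%N)))).
      by rewrite sum_rep Wc mulr0.
    by move=> k _; rewrite mxE.
  have RR : (rep m W *m (rep m W)^T) i0 i0 = m%:R * 2.
    rewrite mxE (eq_bigr (fun k : 'I_(2 * m) => (fun j => W i0 j * W i0 j) (inord ((k %% 2)%N)))).
      rewrite (sum_rep m (fun j : 'I_2 => W i0 j * W i0 j)) -WW mxE; congr (_ * _); apply: eq_bigr => j _; by rewrite [W^T j i0]mxE.
    by move=> k _; rewrite !mxE.
  have := congr1 (fun M : 'M[R]_d => M i0 i0) (Hc (rep m W) Rc).
  rewrite /= E (Hc2 W Wc) !entry_scale RR WW => h.
  lra.
have hZ : forall k, Sigma (emp (Zseq R i0 k)) i0 i0 = 2 * c2.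
  move=> k; have [c [_ Hc]] := hc (2 * k.+1)%N (lt1_2k k).
  have Zc : forall i, \sum_j Zseq R i0 k i j = 0.
    move=> i; under eq_bigr do rewrite Zseq_entry.
    by rewrite -mulr_sumr -mulr_sumr vab_sum !mulr0.
  rewrite (Hc _ Zc) entry_scale mxE.
  under eq_bigr do rewrite [X in _ * X]mxE !Zseq_entry eqxx !mul1r.
  have -> : \sum_(j < 2 * k.+1) Num.sqrt (k.+1%:R) * vab R (ia k) (ib k) 0 j *
      (Num.sqrt (k.+1%:R) * vab R (ia k) (ib k) 0 j) =
      (Num.sqrt (k.+1%:R) ^+ 2) * \sum_j vab R (ia k) (ib k) 0 j * vab R (ia k) (ib k) 0 j.
    by rewrite mulr_sumr; apply: eq_bigr => j _; rewrite expr2; ring.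
  rewrite sqr_sqrtr ?ler0n // vab_sq ?ia_ib //.
  have := Hm k.+1 (ltn0Sn k) c Hc; lra.
have W0c : forall i, \sum_k (0 : 'M[R]_(d, 2)) i k = 0.
  by move=> i; apply: big1 => k _; rewrite mxE.
have hW0 : Sigma (emp (0 : 'M[R]_(d, 2))) = 0 by rewrite (Hc2 _ W0c) mul0mx scaler0.
have Hcv := Hwc (fun k => (2 * k.+1)%N) (Zseq R i0) 2%N 0 (fun k => ltnW (lt1_2k k)) isT
  (@weak_Z R d i0).
have C1 : ((fun M : 'M[R]_d => M i0 i0) \o (fun k => Sigma (emp (Zseq R i0 k))))
    @ \oo --> Sigma (emp (0 : 'M[R]_(d, 2))) i0 i0.
  by apply: continuous_cvg => //; exact: coord_continuous.
have EC : (fun M : 'M[R]_d => M i0 i0) \o (fun k => Sigma (emp (Zseq R i0 k))) =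
    (fun _ => 2 * c2) by apply/funext => k /=; rewrite hZ.
rewrite EC hW0 mxE in C1.
have c20 : 2 * c2 = 0 by exact: (cvg_unique _ (cvg_cst (2 * c2)) C1).
have H0 : forall N m, N = (2 * m)%N -> (0 < m)%N -> forall Y : 'M[R]_(d, N),
    (forall i, \sum_k Y i k = 0) -> Sigma (emp Y) = 0.
  move=> N m -> hm Y hY.
  have h2m : (2 <= 2 * m)%N := leq_pmulr 2 hm.
  have [c [_ Hc]] := hc (2 * m)%N h2m.
  have := Hm m hm c Hc => hcm.
  have c0 : c = 0.
    have : c * m%:R = 0 by rewrite hcm; lra.
    by move/eqP; rewrite mulf_eq0 pnatr_eq0 (gtn_eqF hm) orbF => /eqP.
  by rewrite Hc // c0 scale0r.
move=> Q [n [hn [X ->]]].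
case: n hn X => [//|p] _ X.
rewrite -(emp_rep X (isT : (0 < 2)%N)) -Htr ?muln_gt0 //.
apply: (H0 _ p.+1); first exact: mulnC.
  by [].
by move=> i; apply: center_rows; rewrite muln_gt0.
Qed.

Unset Implicit Arguments.

Theorem theorem5 (R : realType) (d : nat) (hd : (2 <= d)%N) :
  (forall (n : nat) (Sigma : setfun R d -> 'M[R]_d), (2 <= n)%N ->
     singularly_affine_equivariant (@emp_set R d n) Sigma ->
     exists c : R, 0 <= c /\
       forall X : 'M[R]_(d, n),
         Sigma (emp (center_data X)) = c *: (center_data X *m (center_data X)^T))
  /\
  (forall Sigma : setfun R d -> 'M[R]_d,
     affine_equivariant (@emp_all R d) Sigma ->
     weakly_continuous_emp Sigma ->
     forall Q, @emp_all R d Q -> Sigma Q = 0).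
Proof.
split; first exact: part_a.
move=> Sigma Hae Hwc; exact: part_b hd Sigma Hae Hwc.
Qed.
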